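(* Fix $\varepsilon>0$, $\beta\in(0,1)$, an even integer $d>4(e^{2\varepsilon}-1)^2\ln\frac{2}{\beta}$, and an $\varepsilon$-private randomizer $R:[d]\to\mathcal Y$. For every message $y\in\mathcal Y$, if $H$ is chosen uniformly at random among subsets of $[d]$ of size $d/2$, then \[ \Pr_H\left[y \text{ is not } (e^{2\varepsilon}-1)\sqrt{\tfrac{4}{d}\ln\tfrac{2}{\beta}}\text{-leaky with respect to } H,R\right]\ge 1-\beta . \]
   Context: A randomizer $R:[d]\to\mathcal Y$ is a randomized map into a countable message set $\mathcal Y$; it is $\varepsilon$-private if for all $x,x'\in[d]$ and all $Y\subseteq\mathcal Y$, $\Pr[R(x)\in Y]\le e^{\varepsilon}\Pr[R(x')\in Y]$. $\mathbf U$ is the uniform distribution on $[d]$; for $H\subseteq[d]$, $\mathbf U_H$ is the uniform distribution on $H$; $R(\mathbf U)$ (resp. $R(\mathbf U_H)$) is the distribution of $R(\hat x)$ where $\hat x\sim\mathbf U$ (resp. $\hat x\sim \mathbf U_H$). For $H\subset[d]$ with $|H|=d/2$, a message $y$ is $v$-leaky with respect to $H,R$ if $\left|\ln\frac{\Pr[R(\mathbf U_H)=y]}{\Pr[R(\mathbf U)=y]}\right|>v$ (messages with $\Pr[R(\mathbf U)=y]=0$ are regarded as not leaky). *)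

(* Defs.v *)
From Stdlib Require Import Reals Lra List Arith.
Open Scope R_scope.

Fixpoint fsum (n : nat) (f : nat -> R) : R :=
  match n with
  | O => 0
  | S k => fsum k f + f k
  end.

(* A randomizer R : [d] -> Y, with [d] = {0,...,d-1} and the countable
   message set Y encoded into nat.  p x y = Pr[R(x) = y]. *)
Definition is_randomizer (d : nat) (p : nat -> nat -> R) : Prop :=
  (forall x y, 0 <= p x y) /\
  (forall x, (x < d)%nat -> infinite_sum (p x) 1).

Definition prob_in (p : nat -> nat -> R) (x : nat) (S : nat -> bool) (l : R) : Prop :=
  infinite_sum (fun y => if S y then p x y else 0) l.

Definition eps_private (eps : R) (d : nat) (p : nat -> nat -> R) : Prop :=
  forall x x' (S : nat -> bool) l1 l2, (x < d)%nat -> (x' < d)%nat ->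
    prob_in p x S l1 -> prob_in p x' S l2 -> l1 <= exp eps * l2.

(* Subsets of [d] encoded as boolean characteristic vectors of length d. *)
Fixpoint bvecs (n : nat) : list (list bool) :=
  match n with
  | O => nil :: nil
  | S k => map (cons true) (bvecs k) ++ map (cons false) (bvecs k)
  end.

Definition mem (h : list bool) (x : nat) : bool := nth x h false.

Definition card (h : list bool) : nat := count_occ Bool.bool_dec h true.

Definition prU (d : nat) (p : nat -> nat -> R) (y : nat) : R :=
  fsum d (fun x => p x y) / INR d.

Definition prUH (d : nat) (p : nat -> nat -> R) (h : list bool) (y : nat) : R :=
  fsum d (fun x => if mem h x then p x y else 0) / INR (card h).

(* y is v-leaky w.r.t. H, R.  Messages with Pr[R(U)=y] = 0 are not leaky;
   if Pr[R(U_H)=y] = 0 < Pr[R(U)=y] the log-ratio is -infinity, hence leaky. *)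
Definition leaky (v : R) (d : nat) (p : nat -> nat -> R) (h : list bool) (y : nat) : Prop :=
  0 < prU d p y /\
  (prUH d p h y = 0 \/ Rabs (ln (prUH d p h y / prU d p y)) > v).

Definition Rltb (a b : R) : bool := if Rlt_dec a b then true else false.
Definition Reqb (a b : R) : bool := if Req_EM_T a b then true else false.

Definition leakyb (v : R) (d : nat) (p : nat -> nat -> R) (h : list bool) (y : nat) : bool :=
  Rltb 0 (prU d p y) &&
  (Reqb (prUH d p h y) 0 || Rltb v (Rabs (ln (prUH d p h y / prU d p y)))).

Definition half_subsets (d : nat) : list (list bool) :=
  filter (fun h => Nat.eqb (card h) (d / 2)) (bvecs d).

Definition prob_not_leaky (v : R) (d : nat) (p : nat -> nat -> R) (y : nat) : R :=
  INR (length (filter (fun h => negb (leakyb v d p h y)) (half_subsets d)))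
  / INR (length (half_subsets d)).

(* Main.v *)
Require Import Defs.
From Stdlib Require Import Reals Lra List Arith Lia.
From Coquelicot Require Import Coquelicot.
Open Scope R_scope.

Lemma fsum_ext n f g : (forall j, (j < n)%nat -> f j = g j) -> fsum n f = fsum n g.
Proof. induction n; simpl; intros H; auto. rewrite IHn by (intros; apply H; lia). rewrite H by lia; auto. Qed.

Lemma fsum_le n f g : (forall j, (j < n)%nat -> f j <= g j) -> fsum n f <= fsum n g.
Proof. induction n; simpl; intros H; [lra|]. pose proof (IHn ltac:(intros; apply H; lia)). pose proof (H n ltac:(lia)). lra. Qed.

Lemma fsum_plus n f g : fsum n (fun j => f j + g j) = fsum n f + fsum n g.
Proof. induction n; simpl; [ring|]. rewrite IHn; ring. Qed.

Lemma fsum_scal n a f : fsum n (fun j => a * f j) = a * fsum n f.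
Proof. induction n; simpl; [ring|]. rewrite IHn; ring. Qed.

Lemma fsum_const n a : fsum n (fun _ => a) = INR n * a.
Proof. induction n; [simpl; ring|]. change (fsum (S n) _) with (fsum n (fun _ => a) + a). rewrite IHn, S_INR. ring. Qed.

Lemma fsum_shift n g : fsum (S n) g = g 0%nat + fsum n (fun j => g (S j)).
Proof. induction n; simpl in *; [ring|]. rewrite IHn. ring. Qed.

Fixpoint lsum (l : list R) : R := match l with nil => 0 | z :: l' => z + lsum l' end.

Fixpoint esym (k : nat) (l : list R) : R :=
  match l with
  | nil => match k with O => 1 | S _ => 0 end
  | z :: l' => match k with O => 1 | S k' => z * esym k' l' + esym k l' end
  end.

Fixpoint rem (j : nat) (l : list R) : list R :=
  match l, j with
  | nil, _ => nil
  | _ :: l', O => l'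
  | z :: l', S j' => z :: rem j' l'
  end.

Lemma esym0 l : esym 0 l = 1.
Proof. destruct l; auto. Qed.

Lemma esym1 l : esym 1 l = lsum l.
Proof. induction l; simpl; auto. rewrite esym0, IHl. ring. Qed.

Lemma fsum_nth l : fsum (length l) (fun j => nth j l 0) = lsum l.
Proof. induction l; simpl length; [reflexivity|]. rewrite fsum_shift. simpl. rewrite IHl. auto. Qed.

Lemma first_pick l : forall k,
  INR (S k) * esym (S k) l = fsum (length l) (fun j => nth j l 0 * esym k (rem j l)).
Proof.
  induction l as [|z l IH]; intros k.
  - simpl. ring.
  - simpl length. rewrite fsum_shift. simpl nth. simpl rem.
    destruct k as [|k].
    + rewrite (fsum_ext _ _ (fun j => nth j l 0)) by (intros; rewrite esym0; ring).
      rewrite fsum_nth. simpl esym at 1. rewrite esym0, esym1. simpl. ring.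
    + rewrite (fsum_ext _ _ (fun j => z * (nth j l 0 * esym k (rem j l)) + nth j l 0 * esym (S k) (rem j l)))
        by (intros; simpl; ring).
      rewrite fsum_plus, fsum_scal, <- IH, <- IH.
      simpl esym. rewrite !S_INR. ring.
Qed.

Lemma rem_length j l : (j < length l)%nat -> length (rem j l) = pred (length l).
Proof. revert j; induction l; intros [|j] H; simpl in *; try lia. rewrite IHl by lia. destruct l; simpl in *; lia. Qed.

Lemma rem_In j l z : In z (rem j l) -> In z l.
Proof. revert j; induction l; intros [|j] H; simpl in *; auto. destruct H; auto. right; eapply IHl; eauto. Qed.

Lemma rem_lsum j l : (j < length l)%nat -> lsum (rem j l) = lsum l - nth j l 0.
Proof. revert j; induction l; intros [|j] H; simpl in *; try lia; try ring. rewrite IHl by lia. ring. Qed.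

Lemma rem_map f j l : rem j (map f l) = map f (rem j l).
Proof. revert j; induction l; intros [|j]; simpl; auto. rewrite IHl; auto. Qed.

Lemma nth_map0 f j l : (j < length l)%nat -> nth j (map f l) 0 = f (nth j l 0).
Proof. intros H. rewrite nth_indep with (d' := f 0) by (rewrite length_map; auto). apply map_nth. Qed.

Lemma rem_repeat (a : R) j n : (j < n)%nat -> rem j (repeat a n) = repeat a (pred n).
Proof. revert j; induction n; intros [|j] H; simpl; try lia; auto. rewrite IHn by lia. destruct n; simpl; auto; lia. Qed.

Lemma esym_big l : forall k, (length l < k)%nat -> esym k l = 0.
Proof. induction l; intros [|k] H; simpl in *; try lia; auto. rewrite !IHl by lia. ring. Qed.

Lemma esym_nonneg l : (forall z, In z l -> 0 <= z) -> forall k, 0 <= esym k l.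
Proof. induction l; intros H [|k]; simpl; try lra.
  assert (0 <= a) by (apply H; simpl; auto). pose proof (IHl (fun z Hz => H z (or_intror Hz)) k).
  pose proof (IHl (fun z Hz => H z (or_intror Hz)) (S k)). nra. Qed.

Lemma lsum_bounds l L U : (forall z, In z l -> L <= z <= U) -> INR (length l) * L <= lsum l <= INR (length l) * U.
Proof. induction l; intros H; simpl length; simpl lsum; [simpl; lra|].
  rewrite S_INR. pose proof (H a (or_introl eq_refl)). pose proof (IHl (fun z Hz => H z (or_intror Hz))). nra. Qed.

Lemma chord M th x : 0 < M -> Rabs x <= M ->
  exp (th * x) <= ((M - x) * exp (- (th * M)) + (M + x) * exp (th * M)) / (2 * M).
Proof.
  intros HM Hx. assert (Hx2 : -M <= x <= M) by (unfold Rabs in Hx; destruct (Rcase_abs x); lra). clear Hx. rename Hx2 into Hx.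
  pose proof (exp_ineq1_le (- (th*M) - th * x)). pose proof (exp_ineq1_le (th*M - th * x)).
  assert (E1 : exp (- (th*M)) = exp (th*x) * exp (- (th*M) - th * x)) by (rewrite <- exp_plus; f_equal; ring).
  assert (E2 : exp (th*M) = exp (th*x) * exp (th*M - th * x)) by (rewrite <- exp_plus; f_equal; ring).
  pose proof (exp_pos (th*x)).
  apply Rmult_le_reg_r with (2*M); [lra|]. unfold Rdiv. rewrite Rmult_assoc, Rinv_l, Rmult_1_r by lra.
  rewrite E1, E2.
  assert (0 <= M - x) by lra. assert (0 <= M + x) by lra.
  assert ((M - x) * (exp (th * x) * (1 + (- (th*M) - th * x))) + (M + x) * (exp (th * x) * (1 + (th*M - th*x))) = exp (th*x) * (2*M)) by ring.
  assert (0 <= (M - x) * exp (th * x) * (exp (- (th*M) - th * x) - (1 + (- (th*M) - th * x)))) by (apply Rmult_le_pos; [apply Rmult_le_pos|]; lra).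
  assert (0 <= (M + x) * exp (th * x) * (exp (th*M - th * x) - (1 + (th*M - th * x)))) by (apply Rmult_le_pos; [apply Rmult_le_pos|]; lra).
  nra.
Qed.
Lemma mono_aux (f df : R -> R) y : 0 <= y ->
  (forall x, is_derive f x (df x)) -> (forall x, 0 <= x -> df x <= 0) -> f y <= f 0.
Proof.
  intros Hy Hd Hdf.
  destruct (Req_dec y 0) as [->|Hy0]; [lra|].
  destruct (MVT_gen f 0 y df) as [c [Hc Heq]].
  - intros x _; apply Hd.
  - intros x _. apply derivable_continuous_pt; exists (df x); apply is_derive_Reals; apply Hd.
  - rewrite Rmin_left in Hc by lra. rewrite Rmax_right in Hc by lra.
    assert (df c <= 0) by (apply Hdf; lra). nra.
Qed.

Lemma sinh_pos y : 0 <= y -> exp (-y) <= exp y.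
Proof. intros; destruct (Req_dec y 0); [subst; rewrite Ropp_0; lra|]. left; apply exp_increasing; lra. Qed.

Lemma G_nonneg y : 0 <= y -> (exp y - exp (-y))/2 <= y * ((exp y + exp (-y))/2).
Proof.
  intros Hy.
  pose (f := fun x => (exp x - exp (-x))/2 - x * ((exp x + exp (-x))/2)).
  assert (f y <= f 0).
  { apply (mono_aux f (fun x => - (x * ((exp x - exp (-x))/2)))); auto.
    - intros x. unfold f. auto_derive; auto. unfold Rdiv; field.
    - intros x Hx. pose proof (sinh_pos x Hx). nra. }
  unfold f in H. rewrite Ropp_0, exp_0 in H. lra.
Qed.

Lemma cosh_le_pos y : 0 <= y -> (exp y + exp (-y))/2 <= exp (y^2/2).
Proof.
  intros Hy.
  pose (f := fun x => ((exp x + exp (-x))/2) * exp (-(x^2/2))).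
  assert (f y <= f 0).
  { apply (mono_aux f (fun x => ((exp x - exp (-x))/2 - x * ((exp x + exp (-x))/2)) * exp (-(x^2/2)))); auto.
    - intros x. unfold f. auto_derive; auto. unfold Rdiv. replace (x*(x*1)) with (x^2) by ring. field.
    - intros x Hx. pose proof (G_nonneg x Hx). pose proof (exp_pos (-(x^2/2))). nra. }
  unfold f in H. rewrite Ropp_0, exp_0 in H.
  replace (0^2/2) with 0 in H by field. rewrite Ropp_0, exp_0 in H.
  assert (exp (y^2/2) * exp (-(y^2/2)) = 1) by (rewrite <- exp_plus; replace (_ + _) with 0 by ring; apply exp_0).
  pose proof (exp_pos (y^2/2)). pose proof (exp_pos (-(y^2/2))). nra.
Qed.

Lemma cosh_le y : (exp y + exp (-y))/2 <= exp (y^2/2).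
Proof.
  destruct (Rle_dec 0 y). apply cosh_le_pos; auto.
  replace (y^2) with ((-y)^2) by ring.
  pose proof (cosh_le_pos (-y)). rewrite Ropp_involutive in H. lra.
Qed.

Lemma hlite n (X : nat -> R) M th : 0 < M -> (forall j, (j < n)%nat -> Rabs (X j) <= M) -> fsum n X = 0 ->
  fsum n (fun j => exp (th * X j)) <= INR n * exp ((th * M)^2 / 2).
Proof.
  intros HM HX H0.
  eapply Rle_trans.
  { apply fsum_le. intros j Hj. apply (chord M th (X j) HM (HX j Hj)). }
  rewrite (fsum_ext _ _ (fun j => (M * exp (- (th * M)) + M * exp (th*M)) / (2*M) + (exp (th*M) - exp (- (th*M))) / (2*M) * X j))
    by (intros; field; lra).
  rewrite fsum_plus, fsum_scal, fsum_const, H0.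
  replace ((M * exp (- (th * M)) + M * exp (th * M)) / (2 * M)) with ((exp (th*M) + exp (- (th*M)))/2) by (field; lra).
  pose proof (cosh_le (th*M)). pose proof (pos_INR n). nra.
Qed.

Lemma mgf : forall n l k lam L M, length l = n -> (forall z, In z l -> L <= z <= L + M) -> 0 < M ->
  esym k (map (fun z => exp (lam*z)) l) <=
  esym k (repeat 1 n) * exp (lam * INR k * (lsum l / INR n) + INR k * (lam^2*M^2/2)).
Proof.
  induction n as [|n IH]; intros l k lam L M Hl HB HM.
  - destruct l; simpl in Hl; try lia. destruct k; simpl; [|lra].
    simpl. match goal with |- _ <= _ * exp ?e => replace e with 0 by ring end; rewrite exp_0; lra.
  - destruct k as [|k].
    + rewrite !esym0. simpl INR. rewrite Rmult_0_r, !Rmult_0_l, Rplus_0_r, exp_0; lra.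
    + set (q := lam^2*M^2/2). set (Sm := lsum l). set (E' := esym k (repeat 1 n)).
      assert (HE' : 0 <= E') by (apply esym_nonneg; intros z Hz; apply repeat_spec in Hz; lra).
      assert (Hk : 0 < INR (S k)) by (apply lt_0_INR; lia).
      apply Rmult_le_reg_l with (INR (S k)); [exact Hk|].
      rewrite first_pick, length_map, Hl.
      rewrite <- (Rmult_assoc (INR (S k)) (esym (S k) (repeat 1 (S n)))), first_pick, repeat_length.
      rewrite (fsum_ext (S n) (fun j => nth j (repeat 1 (S n)) 0 * esym k (rem j (repeat 1 (S n)))) (fun _ => E'))
        by (intros j Hj; rewrite rem_repeat by lia; unfold E'; simpl pred;
            rewrite nth_indep with (d' := 1) by (rewrite repeat_length; lia); rewrite nth_repeat; ring).
      rewrite fsum_const.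
      eapply Rle_trans.
      { apply fsum_le. intros j Hj.
        rewrite nth_map0 by lia. rewrite rem_map.
        apply Rmult_le_compat_l; [left; apply exp_pos|].
        apply (IH (rem j l) k lam L M); auto.
        - rewrite rem_length; lia.
        - intros z Hz; apply HB; eapply rem_In; eauto. }
      fold E'.
      destruct (le_lt_dec k n) as [Hkn|Hkn].
      2:{ unfold E'. rewrite esym_big by (rewrite repeat_length; lia).
          rewrite (fsum_ext _ _ (fun _ => 0)) by (intros; ring). rewrite fsum_const. lra. }
      set (c := 1 - INR k / INR n).
      assert (Hc : 0 <= c <= 1).
      { unfold c. destruct n. { simpl. unfold Rdiv. rewrite Rinv_0. lra. }
        assert (0 < INR (S n)) by (apply lt_0_INR; lia).
        assert (INR k <= INR (S n)) by (apply le_INR; lia). pose proof (pos_INR k).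
        split; [|unfold Rdiv; apply Rle_trans with (1 - 0); [|lra]; apply Rplus_le_compat_l, Ropp_le_contravar; apply Rmult_le_pos; [lra|left; apply Rinv_0_lt_compat; lra]].
        apply Rle_trans with (1 - 1); [lra|]. apply Rplus_le_compat_l, Ropp_le_contravar.
        apply Rmult_le_reg_r with (INR (S n)); auto. unfold Rdiv. rewrite Rmult_assoc, Rinv_l by lra. lra. }
      set (A := lam * INR (S k) * (Sm / INR (S n))).
      set (X := fun j => nth j l 0 - Sm / INR (S n)).
      assert (HSn : 0 < INR (S n)) by (apply lt_0_INR; lia).
      rewrite (fsum_ext _ _ (fun j => E' * exp (INR k * q) * exp A * exp ((lam * c) * X j))).
      2:{ intros j Hj. rewrite rem_lsum by lia. fold Sm. fold q.
          transitivity (E' * exp (lam * nth j l 0 + (lam * INR k * ((Sm - nth j l 0) / INR n) + INR k * q))).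
          { rewrite !exp_plus. ring. }
          replace (lam * nth j l 0 + (lam * INR k * ((Sm - nth j l 0) / INR n) + INR k * q)) with (INR k * q + A + lam * c * X j).
          { rewrite !exp_plus. ring. }
          unfold A, X, c. destruct n.
          - assert (k = 0%nat) by lia. subst k. simpl INR. unfold Rdiv. rewrite Rinv_0. simpl. field.
          - rewrite S_INR. rewrite (S_INR (S n)). rewrite (S_INR n). field.
            split; pose proof (pos_INR n); lra. }
      rewrite fsum_scal.
      assert (HX : fsum (S n) X = 0).
      { unfold X. rewrite (fsum_ext _ _ (fun j => nth j l 0 + (- (Sm / INR (S n))))) by (intros; ring).
        rewrite fsum_plus, fsum_const. rewrite <- Hl at 1. rewrite fsum_nth. fold Sm. field. lra. }
      assert (HXb : forall j, (j < S n)%nat -> Rabs (X j) <= M).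
      { intros j Hj. pose proof (lsum_bounds l L (L+M) HB). rewrite Hl in H. fold Sm in H.
        assert (L <= Sm / INR (S n) <= L + M).
        { split; [apply Rmult_le_reg_r with (INR (S n)); auto; unfold Rdiv; rewrite Rmult_assoc, Rinv_l by lra; lra|].
          apply Rmult_le_reg_r with (INR (S n)); auto; unfold Rdiv; rewrite Rmult_assoc, Rinv_l by lra; lra. }
        assert (L <= nth j l 0 <= L + M) by (apply HB, nth_In; lia).
        unfold X. apply Rabs_le. lra. }
      pose proof (hlite (S n) X M (lam * c) HM HXb HX) as Hh.
      assert (exp ((lam * c * M) ^ 2 / 2) <= exp q).
      { unfold q. destruct (Req_dec ((lam*c*M)^2/2) (lam ^ 2 * M ^ 2 / 2)) as [->|]; [lra|]. left; apply exp_increasing.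
        assert ((lam*c*M)^2/2 = c^2 * (lam ^ 2 * M ^ 2 / 2)) by field. rewrite H0.
        assert (0 <= lam ^ 2 * M ^ 2 / 2) by (apply Rmult_le_pos; [apply Rmult_le_pos; apply pow2_ge_0|lra]).
        assert (c^2 <= 1) by nra. nra. }
      assert (EQ : INR (S n) * E' * exp (A + INR (S k) * q)
               = E' * exp (INR k * q) * exp A * (INR (S n) * exp q)).
      { replace (A + INR (S k) * q) with (INR k * q + A + q) by (rewrite S_INR; ring).
        rewrite !exp_plus; ring. }
      rewrite EQ. apply Rmult_le_compat_l.
      { apply Rmult_le_pos; [apply Rmult_le_pos; auto; left; apply exp_pos|left; apply exp_pos]. }
      eapply Rle_trans; [exact Hh|]. apply Rmult_le_compat_l; lra.
Qed.

Fixpoint selprod (h : list bool) (l : list R) : R :=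
  match h, l with b :: h', z :: l' => (if b then z else 1) * selprod h' l' | _, _ => 1 end.
Fixpoint selsum (h : list bool) (l : list R) : R :=
  match h, l with b :: h', z :: l' => (if b then z else 0) + selsum h' l' | _, _ => 0 end.

Lemma lsum_app l1 l2 : lsum (l1 ++ l2) = lsum l1 + lsum l2.
Proof. induction l1; simpl; [ring|]. rewrite IHl1; ring. Qed.

Lemma lsum_scal {T} (L : list T) a f : lsum (map (fun x => a * f x) L) = a * lsum (map f L).
Proof. induction L; simpl; [ring|]. rewrite IHL; ring. Qed.

Lemma lsum_ext {T} (L : list T) f g : (forall x, In x L -> f x = g x) -> lsum (map f L) = lsum (map g L).
Proof. induction L; simpl; intros H; auto. rewrite H, IHL; auto. Qed.

Lemma lsum_le {T} (L : list T) f g : (forall x, In x L -> f x <= g x) -> lsum (map f L) <= lsum (map g L).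
Proof. induction L; simpl; intros H; [lra|]. pose proof (H a (or_introl eq_refl)). pose proof (IHL (fun x Hx => H x (or_intror Hx))). lra. Qed.

Lemma card_true h : card (true :: h) = S (card h).
Proof. unfold card; simpl. destruct (Bool.bool_dec true true); congruence. Qed.
Lemma card_false h : card (false :: h) = card h.
Proof. unfold card; simpl. destruct (Bool.bool_dec false true); congruence. Qed.

Lemma link l : forall k,
  lsum (map (fun h => if Nat.eqb (card h) k then selprod h l else 0) (bvecs (length l))) = esym k l.
Proof.
  induction l as [|z l IH]; intros k.
  - destruct k; simpl; unfold card; simpl; ring.
  - simpl length. simpl bvecs. rewrite map_app, lsum_app, !map_map.
    rewrite (lsum_ext _ (fun x => if card (false :: x) =? k then selprod (false :: x) (z :: l) else 0)
               (fun h => if card h =? k then selprod h l else 0))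
      by (intros; rewrite card_false; simpl; destruct (card x =? k); ring).
    rewrite IH.
    destruct k as [|k].
    + rewrite (lsum_ext _ _ (fun h => 0 * 0)) by (intros; rewrite card_true; simpl; ring).
      rewrite lsum_scal, esym0. simpl. ring.
    + rewrite (lsum_ext _ _ (fun h => z * (if card h =? k then selprod h l else 0)))
        by (intros; rewrite card_true; simpl; destruct (card x =? k); ring).
      rewrite lsum_scal, IH. simpl. ring.
Qed.

Lemma bvecs_length n h : In h (bvecs n) -> length h = n.
Proof. revert h; induction n; simpl; intros h H.
  - destruct H as [<-|[]]; auto.
  - apply in_app_or in H. destruct H as [H|H]; apply in_map_iff in H; destruct H as [x [<- Hx]]; simpl; auto. Qed.

Lemma fsum_seq n g : lsum (map g (seq 0 n)) = fsum n g.
Proof. induction n; [reflexivity|]. rewrite seq_S, map_app, lsum_app, IHn. simpl. ring. Qed.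

Lemma sel_index h : forall g,
  fsum (length h) (fun x => if nth x h false then g x else 0) = selsum h (map g (seq 0 (length h))).
Proof.
  induction h as [|b h IH]; intros g; [reflexivity|].
  simpl length. rewrite fsum_shift. simpl nth.
  rewrite IH. change (seq 0 (S (length h))) with (0%nat :: seq 1 (length h)). rewrite <- seq_shift. simpl. rewrite map_map. auto.
Qed.

Lemma exp_selsum lam h : forall l, exp (lam * selsum h l) = selprod h (map (fun z => exp (lam * z)) l).
Proof. induction h as [|b h IH]; intros [|z l]; simpl; try (rewrite Rmult_0_r, exp_0; reflexivity).
  rewrite Rmult_plus_distr_l, exp_plus, IH. destruct b; [ring|]. rewrite Rmult_0_r, exp_0. ring. Qed.

Lemma selprod_ones h : forall n, selprod h (repeat 1 n) = 1.
Proof. induction h as [|b h IH]; intros [|n]; simpl; auto. rewrite IH; destruct b; ring. Qed.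

Lemma filter_sum {T} (L : list T) P f :
  lsum (map f (filter P L)) = lsum (map (fun h => if P h then f h else 0) L).
Proof. induction L; simpl; auto. destruct (P a); simpl; rewrite IHL; ring. Qed.

Lemma flen_bound {T} (L : list T) P f : (forall h, In h L -> 0 <= f h) -> (forall h, In h L -> P h = true -> 1 <= f h) ->
  INR (length (filter P L)) <= lsum (map f L).
Proof. induction L; simpl; intros H1 H2; [lra|].
  pose proof (IHL (fun h Hh => H1 h (or_intror Hh)) (fun h Hh => H2 h (or_intror Hh))).
  destruct (P a) eqn:E; simpl length; try rewrite S_INR.
  - pose proof (H2 a (or_introl eq_refl) E). lra.
  - pose proof (H1 a (or_introl eq_refl)). lra. Qed.

Lemma flen_or {T} (L : list T) P Q R' : (forall h, In h L -> P h = true -> Q h = true \/ R' h = true) ->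
  (length (filter P L) <= length (filter Q L) + length (filter R' L))%nat.
Proof. induction L; simpl; intros H; auto.
  pose proof (IHL (fun h Hh => H h (or_intror Hh))). specialize (H a (or_introl eq_refl)). destruct (P a), (Q a), (R' a); simpl; try lia.
  all: destruct H; auto; discriminate. Qed.

Lemma flen_neg {T} (L : list T) P : (length (filter (fun h => negb (P h)) L) + length (filter P L) = length L)%nat.
Proof. induction L; simpl; auto. destruct (P a); simpl; lia. Qed.

Lemma esym_ones_pos n : forall k, (k <= n)%nat -> 0 < esym k (repeat 1 n).
Proof. induction n; intros [|k] H; simpl; try lra; try lia.
  assert (k <= n)%nat by lia. pose proof (IHn k H0).
  assert (0 <= esym (S k) (repeat 1 n)) by (apply esym_nonneg; intros z Hz; apply repeat_spec in Hz; lra). lra. Qed.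

Lemma argmin (a : nat -> R) n : (0 < n)%nat -> exists x0, (x0 < n)%nat /\ forall x, (x < n)%nat -> a x0 <= a x.
Proof. induction n; intros H; [lia|]. destruct n.
  - exists 0%nat. split; auto. intros x Hx. assert (x = 0%nat) by lia. subst; lra.
  - destruct (IHn ltac:(lia)) as [x0 [H0 H1]].
    destruct (Rle_dec (a x0) (a (S n))).
    + exists x0. split; [lia|]. intros x Hx. destruct (Nat.eq_dec x (S n)); [subst; auto|]. apply H1; lia.
    + exists (S n). split; [lia|]. intros x Hx. destruct (Nat.eq_dec x (S n)); [subst; lra|]. pose proof (H1 x ltac:(lia)). lra.
Qed.

Lemma single_sum (p : nat -> nat -> R) x y :
  prob_in p x (fun z => Nat.eqb z y) (p x y).
Proof.
  unfold prob_in.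
  assert (E : forall n, sum_f_R0 (fun z => if Nat.eqb z y then p x z else 0) n = if Nat.leb y n then p x y else 0).
  { induction n.
    - simpl. destruct y; simpl; auto.
    - change (sum_f_R0 ?f (S n)) with (sum_f_R0 f n + f (S n)). cbv beta. rewrite IHn. destruct (Nat.leb y n) eqn:E1, (Nat.eqb (S n) y) eqn:E2, (Nat.leb y (S n)) eqn:E3;
      apply Nat.leb_le in E1 || apply Nat.leb_gt in E1;
      apply Nat.eqb_eq in E2 || apply Nat.eqb_neq in E2;
      apply Nat.leb_le in E3 || apply Nat.leb_gt in E3; try lia; subst; try ring; rewrite Nat.eqb_refl; ring. }
  intros e He. exists y. intros n Hn. rewrite E.
  replace (Nat.leb y n) with true by (symmetry; apply Nat.leb_le; lia). unfold R_dist. rewrite Rminus_diag, Rabs_R0. auto.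
Qed.

Lemma ratio_ok (E t v r : R) : 1 <= E -> 0 <= t -> v = (E+1)*t -> v < 1 -> Rabs (r - 1) < t ->
  0 < r /\ Rabs (ln r) <= v.
Proof.
  intros HE Ht Hv Hv1 Hr.
  assert (Hr2 : 1 - t < r < 1 + t) by (unfold Rabs in Hr; destruct (Rcase_abs (r-1)); lra).
  assert (t < 1) by nra.
  assert (Hr0 : 0 < r) by lra. split; auto.
  destruct (Rle_dec 1 r) as [H1|H1].
  - assert (0 <= ln r) by (rewrite <- ln_1; apply ln_le; lra).
    assert (ln r <= r - 1).
    { rewrite <- (ln_exp (r - 1)). apply ln_le; auto. pose proof (exp_ineq1_le (r - 1)). lra. }
    rewrite Rabs_right by lra. nra.
  - assert (ln r < 0) by (rewrite <- ln_1; apply ln_increasing; lra).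
    assert (- ln r <= / r - 1).
    { rewrite <- ln_Rinv by auto. rewrite <- (ln_exp (/ r - 1)). apply ln_le.
      apply Rinv_0_lt_compat; auto. pose proof (exp_ineq1_le (/ r - 1)). lra. }
    rewrite Rabs_left by lra.
    assert (/ r - 1 <= v).
    { assert (1 <= r * (1 + v)) by nra.
      apply Rmult_le_reg_l with r; auto. rewrite Rmult_minus_distr_l, Rinv_r by lra. lra. }
    lra.
Qed.

Lemma flen_ones {T} (L : list T) : INR (length L) = lsum (map (fun _ => 1) L).
Proof. induction L; simpl length; [reflexivity|]. rewrite S_INR, IHL. simpl. ring. Qed.

Lemma flen_zero {T} (L : list T) P : (forall h, In h L -> P h = false) -> length (filter P L) = 0%nat.
Proof. induction L; simpl; intros H; auto. rewrite (H a (or_introl eq_refl)). apply IHL; auto. Qed.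

Theorem mainTheorem4 (eps beta : R) (d : nat) (p : nat -> nat -> R) :
  0 < eps -> 0 < beta < 1 ->
  Nat.Even d ->
  INR d > 4 * (exp (2 * eps) - 1) ^ 2 * ln (2 / beta) ->
  is_randomizer d p -> eps_private eps d p ->
  forall y : nat,
    prob_not_leaky ((exp (2 * eps) - 1) * sqrt (4 / INR d * ln (2 / beta))) d p y
      >= 1 - beta.
Proof.
  intros Heps Hbeta Hev Hd _ Hpriv y.
  set (K := ln (2 / beta)).
  assert (HK : 0 < K) by (unfold K; rewrite <- ln_1; apply ln_increasing; [lra|];
    apply Rmult_lt_reg_r with beta; [lra|]; unfold Rdiv; rewrite Rmult_assoc, Rinv_l; lra).
  set (E := exp eps).
  assert (HE : 1 < E) by (unfold E; rewrite <- exp_0; apply exp_increasing; lra).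
  assert (HE2 : exp (2 * eps) = E * E) by (unfold E; rewrite <- exp_plus; f_equal; ring).
  rewrite HE2 in Hd |- *. fold K in Hd.
  destruct Hev as [m Hm].
  assert (Hd0 : 0 < INR d).
  { assert (0 <= 4 * (E * E - 1) ^ 2 * K) by (apply Rmult_le_pos; [apply Rmult_le_pos; [lra|apply pow2_ge_0]|lra]). lra. }
  assert (Hm1 : (1 <= m)%nat) by (destruct m; [rewrite Hm in Hd0; simpl in Hd0; lra|lia]).
  assert (Hdm : INR d = 2 * INR m) by (rewrite Hm, mult_INR; reflexivity).
  assert (Hdiv : (d / 2 = m)%nat) by (rewrite Hm, Nat.mul_comm; apply Nat.div_mul; lia).
  assert (HmR : 0 < INR m) by (apply lt_0_INR; lia).
  set (w := sqrt (4 / INR d * K)).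
  assert (Hw2 : w * w = 4 / INR d * K) by (unfold w; apply sqrt_sqrt; apply Rmult_le_pos; [unfold Rdiv; apply Rmult_le_pos; [lra|left; apply Rinv_0_lt_compat; lra]|lra]).
  assert (Hw0 : 0 <= w) by apply sqrt_pos.
  set (v := (E * E - 1) * w).
  assert (Hv1 : v < 1).
  { assert (v * v < 1).
    { unfold v. replace ((E * E - 1) * w * ((E * E - 1) * w)) with ((E*E-1)^2 * (w*w)) by ring.
      rewrite Hw2. apply Rmult_lt_reg_r with (INR d); auto. unfold Rdiv.
      replace ((E * E - 1) ^ 2 * (4 * / INR d * K) * INR d) with (4 * (E * E - 1) ^ 2 * K) by (field; lra). lra. }
    assert (0 <= v) by (unfold v; apply Rmult_le_pos; nra). nra. }
  unfold prob_not_leaky. fold v.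
  set (HL := half_subsets d).
  set (N := INR (length HL)).
  assert (HN : N = esym m (repeat 1 d)).
  { unfold N. rewrite flen_ones. unfold HL, half_subsets. rewrite filter_sum. rewrite Hdiv.
    rewrite <- (repeat_length 1 d) at 1. rewrite <- link.
    apply lsum_ext. intros h _. rewrite selprod_ones. reflexivity. }
  assert (HNpos : 0 < N) by (rewrite HN; apply esym_ones_pos; lia).
  set (Lk := INR (length (filter (fun h => leakyb v d p h y) HL))).
  assert (Hsplit : INR (length (filter (fun h => negb (leakyb v d p h y)) HL)) = N - Lk).
  { unfold N, Lk. rewrite <- (flen_neg HL (fun h => leakyb v d p h y)). rewrite plus_INR. ring. }
  rewrite Hsplit.
  cut (Lk <= beta * N).
  { intros HLk. apply Rle_ge. apply Rmult_le_reg_r with N; auto. unfold Rdiv. rewrite Rmult_assoc, Rinv_l by lra. lra. }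
  destruct (Rlt_dec 0 (prU d p y)) as [HmuPos|HmuNeg].
  2:{ unfold Lk. rewrite flen_zero. { simpl. nra. }
      intros h _. unfold leakyb, Rltb. destruct (Rlt_dec 0 (prU d p y)); [contradiction|reflexivity]. }
  set (a := fun x => p x y).
  set (al := map a (seq 0 d)).
  assert (Hal : length al = d) by (unfold al; rewrite length_map, length_seq; auto).
  set (mu := prU d p y).
  assert (Hmu : mu = lsum al / INR d) by (unfold mu, prU, al; rewrite fsum_seq; reflexivity).
  assert (Hp : forall x x', (x < d)%nat -> (x' < d)%nat -> a x <= E * a x').
  { intros x x' Hx Hx'. unfold a, E. apply (Hpriv x x' (fun z => Nat.eqb z y)); auto; apply single_sum. }
  destruct (argmin a d ltac:(lia)) as [x0 [Hx0 Hmin]].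
  set (L0 := a x0). set (M := (E - 1) * L0).
  assert (HB : forall z, In z al -> L0 <= z <= L0 + M).
  { intros z Hz. unfold al in Hz. apply in_map_iff in Hz. destruct Hz as [x [<- Hx]].
    apply in_seq in Hx. split; [apply Hmin; lia|]. unfold M. pose proof (Hp x x0 ltac:(lia) Hx0). fold L0 in H. lra. }
  pose proof (lsum_bounds al L0 (L0 + M) HB) as Hsb. rewrite Hal in Hsb.
  assert (HL0 : 0 < L0).
  { destruct (Rlt_dec 0 L0); auto. exfalso.
    assert (HL0n : L0 <= 0) by lra.
    assert (H1 : INR d * E * L0 <= INR d * E * 0) by (apply Rmult_le_compat_l; [nra|lra]).
    assert (H2 : INR d * (L0 + M) = INR d * E * L0) by (unfold M; ring).
    assert (lsum al <= 0) by lra.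
    assert (mu <= 0). { rewrite Hmu. unfold Rdiv. assert (0 < / INR d) by (apply Rinv_0_lt_compat; auto). nra. }
    fold mu in HmuPos. lra. }
  assert (HL0mu : L0 <= mu).
  { rewrite Hmu. apply Rmult_le_reg_r with (INR d); auto. unfold Rdiv. rewrite Rmult_assoc, Rinv_l by lra. lra. }
  assert (HM : 0 < M) by (unfold M; nra).
  set (Sh := fun h => fsum d (fun x => if mem h x then a x else 0)).
  assert (HShsel : forall h, In h HL -> Sh h = selsum h al).
  { intros h Hh. unfold HL, half_subsets in Hh. apply filter_In in Hh. destruct Hh as [Hh _].
    apply bvecs_length in Hh. unfold Sh, al, mem. rewrite <- Hh. apply sel_index. }
  assert (Hcard : forall h, In h HL -> card h = m).
  { intros h Hh. unfold HL, half_subsets in Hh. apply filter_In in Hh. destruct Hh as [_ Hh].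
    apply Nat.eqb_eq in Hh. lia. }
  assert (HSE : forall lam, lsum (map (fun h => exp (lam * Sh h)) HL) <= N * exp (lam * INR m * mu + INR m * (lam^2*M^2/2))).
  { intros lam.
    rewrite (lsum_ext _ _ (fun h => selprod h (map (fun z => exp (lam * z)) al)))
      by (intros h Hh; rewrite HShsel by auto; apply exp_selsum).
    unfold HL, half_subsets. rewrite filter_sum, Hdiv.
    replace (bvecs d) with (bvecs (length (map (fun z => exp (lam * z)) al))) by (rewrite length_map, Hal; auto).
    rewrite link. fold HL. rewrite HN, Hmu.
    pose proof (mgf d al m lam L0 M Hal HB HM). exact H. }
  set (u := M * INR m * w).
  set (lam := u / (INR m * M^2)).
  assert (Hexp : - lam * u + INR m * (lam^2 * M^2/2) = - K).
  { unfold lam, u. replace (4 / INR d * K) with (2 / INR m * K) in Hw2 by (rewrite Hdm; field; lra).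
    field_simplify; [|split; lra]. replace (w^2) with (w*w) by ring. rewrite Hw2. field. lra. }
  assert (HeK : exp (- K) = beta / 2).
  { rewrite exp_Ropp. unfold K. rewrite exp_ln. field. lra. unfold Rdiv; apply Rmult_lt_0_compat; [lra|apply Rinv_0_lt_compat; lra]. }
  assert (Hlam : 0 <= lam).
  { unfold lam, u. unfold Rdiv. apply Rmult_le_pos. apply Rmult_le_pos; [apply Rmult_le_pos|]; lra.
    left; apply Rinv_0_lt_compat. apply Rmult_lt_0_compat; [lra|apply pow_lt; lra]. }
  set (up := fun h => if Rle_dec u (Sh h - INR m * mu) then true else false).
  set (dn := fun h => if Rle_dec u (INR m * mu - Sh h) then true else false).
  assert (Hup : INR (length (filter up HL)) <= N * (beta / 2)).
  { eapply Rle_trans.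
    { apply (flen_bound HL up (fun h => exp (lam * (Sh h - INR m * mu - u)))).
      - intros; left; apply exp_pos.
      - intros h _ Hh. unfold up in Hh. destruct Rle_dec; [|discriminate].
        pose proof (exp_ineq1_le (lam * (Sh h - INR m * mu - u))). nra. }
    rewrite (lsum_ext _ _ (fun h => exp (- lam * (INR m * mu + u)) * exp (lam * Sh h)))
      by (intros; rewrite <- exp_plus; f_equal; ring).
    rewrite lsum_scal. rewrite <- HeK, <- Hexp.
    eapply Rle_trans. { apply Rmult_le_compat_l; [left; apply exp_pos|]. apply HSE. }
    rewrite Rmult_comm, Rmult_assoc, <- exp_plus. apply Rmult_le_compat_l; [lra|]. right; f_equal; ring. }
  assert (Hdn : INR (length (filter dn HL)) <= N * (beta / 2)).
  { eapply Rle_trans.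
    { apply (flen_bound HL dn (fun h => exp (- lam * (Sh h - INR m * mu + u)))).
      - intros; left; apply exp_pos.
      - intros h _ Hh. unfold dn in Hh. destruct Rle_dec; [|discriminate].
        pose proof (exp_ineq1_le (- lam * (Sh h - INR m * mu + u))). nra. }
    rewrite (lsum_ext _ _ (fun h => exp (lam * (INR m * mu - u)) * exp (- lam * Sh h)))
      by (intros; rewrite <- exp_plus; f_equal; ring).
    rewrite lsum_scal. rewrite <- HeK, <- Hexp.
    eapply Rle_trans. { apply Rmult_le_compat_l; [left; apply exp_pos|]. apply HSE. }
    rewrite Rmult_comm, Rmult_assoc, <- exp_plus. apply Rmult_le_compat_l; [lra|]. right; f_equal. replace ((-lam)^2) with (lam^2) by (simpl; ring). ring. }
  assert (Hor : (length (filter (fun h => leakyb v d p h y) HL) <= length (filter up HL) + length (filter dn HL))%nat).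
  { apply flen_or. intros h Hh Hlk.
    unfold up, dn. destruct (Rle_dec u (Sh h - INR m * mu)); [left; auto|].
    destruct (Rle_dec u (INR m * mu - Sh h)); [right; auto|]. exfalso.
    set (r := (Sh h / INR m) / mu).
    assert (Hr : Rabs (r - 1) < (E - 1) * w).
    { unfold r. replace (Sh h / INR m / mu - 1) with ((Sh h - INR m * mu) / (INR m * mu)) by (field; lra).
      unfold Rdiv. rewrite Rabs_mult, Rabs_inv, (Rabs_right (INR m * mu)) by nra.
      apply Rmult_lt_reg_r with (INR m * mu); [nra|]. rewrite Rmult_assoc, Rinv_l by nra.
      assert (Rabs (Sh h - INR m * mu) < u) by (unfold Rabs; destruct Rcase_abs; lra).
      assert (u <= (E - 1) * w * (INR m * mu)).
      { unfold u, M. assert (0 <= (E-1) * INR m * w) by (apply Rmult_le_pos; [apply Rmult_le_pos|]; lra). nra. }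
      lra. }
    destruct (ratio_ok E ((E - 1) * w) v r ltac:(lra) ltac:(apply Rmult_le_pos; lra) ltac:(unfold v; ring) Hv1 Hr) as [Hr0 Hrl].
    revert Hlk. unfold leakyb, prUH. fold mu.
    change (fsum d (fun x => if mem h x then p x y else 0)) with (Sh h). rewrite Hcard by auto.
    unfold Rltb, Reqb. destruct (Rlt_dec 0 mu); [|lra].
    destruct (Req_EM_T (Sh h / INR m) 0) as [Hz|Hz].
    { exfalso. unfold r in Hr0. rewrite Hz in Hr0. unfold Rdiv in Hr0. rewrite Rmult_0_l in Hr0. lra. }
    destruct (Rlt_dec v (Rabs (ln (Sh h / INR m / mu)))) as [Hbad|Hbad]; [|simpl; discriminate].
    fold r in Hbad. lra. }
  unfold Lk. apply le_INR in Hor. rewrite plus_INR in Hor. lra.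
Qed.
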